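(* Let $\mathcal{H}$ be a real Hilbert space with orthonormal basis $(\varphi_\gamma)_{\gamma\in\Gamma}$, let $g\in\mathcal{H}$, let $n\in\mathbb{N}$, and for $1\le i\le n$ let $1\le p_i\le 2$ and let $W_i=(w_{i,\gamma})_{\gamma\in\Gamma}$ be a sequence of strictly positive weights. Define $$\Phi:\mathcal{H}\to\mathbb{R}\cup\{+\infty\},\qquad \Phi(f)=\|f-g\|_{\mathcal{H}}^2+\sum_{i=1}^n |||f|||_{W_i,p_i}^{p_i},\qquad |||f|||_{W_i,p_i}=\Big(\sum_{\gamma\in\Gamma}w_{i,\gamma}|\langle f,\varphi_\gamma\rangle|^{p_i}\Big)^{1/p_i}.$$ For each $\gamma\in\Gamma$, write $g_\gamma=\langle g,\varphi_\gamma\rangle$ and let $S_{(w_{1,\gamma},\dots,w_{n,\gamma}),(p_1,\dots,p_n)}(g_\gamma)$ denote the minimizer of the function $M_\gamma:\mathbb{R}\to\mathbb{R}$, $M_\gamma(x)=x^2+g_\gamma^2-2g_\gamma x+w_{1,\gamma}|x|^{p_1}+\dots+w_{n,\gamma}|x|^{p_n}$. Then $$f_m=\sum_{\gamma\in\Gamma}S_{(w_{1,\gamma},\dots,w_{n,\gamma}),(p_1,\dots,p_n)}(g_\gamma)\,\varphi_\gamma$$ is a minimizer of $\Phi$.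
   Context: Inner products $\langle f,\varphi_\gamma\rangle$ are real. *)

(* Defs.v *)
From HB Require Import structures.
From mathcomp Require Import all_boot all_order all_algebra finmap.
From mathcomp Require Import all_classical all_reals all_analysis.
Set Implicit Arguments. Unset Strict Implicit. Unset Printing Implicit Defensive.
Import Order.TTheory GRing.Theory Num.Theory.
Import numFieldNormedType.Exports.
Local Open Scope classical_set_scope.
Local Open Scope ring_scope.

(* Filter of finite subsets of I ordered by inclusion (unordered sums),
   as in mathcomp-analysis showcase/summability.v *)
Definition totally {I : choiceType} : set_system {fset I} :=
  filter_from setT (fun A => [set B | (A `<=` B)%fset]).

Instance totally_filter {I : choiceType} : ProperFilter (@totally I).
Proof.
eapply filter_from_proper; last by move=> A _; exists A; rewrite /= fsubset_refl.
apply: filter_fromT_filter; first by exists fset0.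
by move=> A B /=; exists (A `|` B)%fset => P /=; rewrite fsubUset => /andP[].
Qed.

Definition partial_sum {I : choiceType} {V : zmodType}
  (x : I -> V) (A : {fset I}) : V := \sum_(i : A) x (val i).

Definition inner_product (R : realType) (V : normedModType R) (ip : V -> V -> R) :=
  [/\ forall x y, ip x y = ip y x,
      forall (a : R) x y z, ip (a *: x + y) z = a * ip x z + ip y z
    & forall x, `|x| ^+ 2 = ip x x].

Definition orthonormal_basis (R : realType) (V : normedModType R)
  (ip : V -> V -> R) (G : choiceType) (phi : G -> V) :=
  (forall a b, ip (phi a) (phi b) = (a == b)%:R) /\
  (forall f, (forall a, ip f (phi a) = 0) -> f = 0).

Definition wnorm_p (R : realType) (V : normedModType R) (ip : V -> V -> R)
  (G : choiceType) (phi : G -> V) (w : G -> R) (p : R) (f : V) : \bar R :=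
  \esum_(c in [set: G]) ((w c * (`|ip f (phi c)| `^ p))%:E).

Definition Phi (R : realType) (V : normedModType R) (ip : V -> V -> R)
  (G : choiceType) (phi : G -> V) (g : V) (n : nat)
  (p : 'I_n -> R) (w : 'I_n -> G -> R) (f : V) : \bar R :=
  ((`|f - g| ^+ 2)%:E + \sum_(i < n) wnorm_p ip phi (w i) (p i) f)%E.

Definition Mfun (R : realType) (n : nat) (wc : 'I_n -> R) (p : 'I_n -> R)
  (gc : R) (x : R) : R :=
  x ^+ 2 + gc ^+ 2 - 2 * gc * x + \sum_(i < n) wc i * (`|x| `^ p i).

(* Main.v *)
Require Import Defs.
From HB Require Import structures.
From mathcomp Require Import all_boot all_order all_algebra finmap.
From mathcomp Require Import all_classical all_reals all_analysis.
From mathcomp Require Import ring lra.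
Import Order.TTheory GRing.Theory Num.Theory.
Import numFieldNormedType.Exports.
Local Open Scope classical_set_scope.
Local Open Scope ring_scope.

Section Hilb.
Variables (R : realType) (H : completeNormedModType R) (ip : H -> H -> R).
Hypothesis hip : inner_product ip.
Variables (G : choiceType) (phi : G -> H).
Hypothesis hon : orthonormal_basis ip phi.

Lemma ipC x y : ip x y = ip y x. Proof. by case: hip. Qed.
Lemma ipn x : ip x x = `|x| ^+ 2. Proof. by case: hip. Qed.
Lemma ip_lin a x y z : ip (a *: x + y) z = a * ip x z + ip y z.
Proof. by case: hip. Qed.
Lemma ipDl x y z : ip (x + y) z = ip x z + ip y z.
Proof. by have := ip_lin 1 x y z; rewrite scale1r mul1r. Qed.
Lemma ip0l z : ip 0 z = 0.
Proof. have := ipDl 0 0 z; rewrite addr0; lra. Qed.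
Lemma ipZl a x z : ip (a *: x) z = a * ip x z.
Proof. by have := ip_lin a x 0 z; rewrite addr0 ip0l addr0. Qed.
Lemma ipNl x z : ip (- x) z = - ip x z.
Proof. by rewrite -scaleN1r ipZl mulN1r. Qed.
Lemma ipBl x y z : ip (x - y) z = ip x z - ip y z.
Proof. by rewrite ipDl ipNl. Qed.
Lemma ipDr x y z : ip z (x + y) = ip z x + ip z y.
Proof. by rewrite ipC ipDl ipC (ipC y). Qed.
Lemma ipBr x y z : ip z (x - y) = ip z x - ip z y.
Proof. by rewrite ipC ipBl ipC (ipC y). Qed.
Lemma ipNr x z : ip z (- x) = - ip z x.
Proof. by rewrite ipC ipNl ipC. Qed.
Lemma ip_suml (s : seq G) (F : G -> H) z :
  ip (\sum_(i <- s) F i) z = \sum_(i <- s) ip (F i) z.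
Proof.
elim: s => [|i s IH]; first by rewrite !big_nil ip0l.
by rewrite !big_cons ipDl IH.
Qed.

Lemma ip_bound u z : `|ip u z| <= `|u| * (`|u| + `|z|).
Proof.
have e : 4 * ip u z = `|u + z| ^+ 2 - `|u - z| ^+ 2.
  rewrite -!ipn !(ipDl, ipNl, ipDr, ipNr) (ipC z u); ring.
set A := `|u + z|; set B := `|u - z|.
have h1 : `|A - B| <= 2 * `|u|.
  rewrite /B (distrC u z); apply: le_trans (ler_dist_dist _ _) _.
  rewrite (_ : u + z - (z - u) = u *+ 2); last first.
    by rewrite opprB addrCA addrK mulr2n.
  by rewrite normrMn mulr_natl.
have h2 : A + B <= 2 * (`|u| + `|z|).
  have := ler_normD u z; have := ler_normB u z; rewrite -/A -/B; lra.
have e2 : A ^+ 2 - B ^+ 2 = (A - B) * (A + B) by ring.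
have A0 : 0 <= A by exact: normr_ge0.
have B0 : 0 <= B by exact: normr_ge0.
have : `|4 * ip u z| <= 2 * `|u| * (2 * (`|u| + `|z|)).
  rewrite e e2 normrM (ger0_norm (addr_ge0 A0 B0)).
  by apply: ler_pM => //; rewrite addr_ge0.
rewrite normrM ger0_norm //.
have := normr_ge0 (ip u z); have := normr_ge0 u; have := normr_ge0 z. nra.
Qed.


Definition ps (a : G -> R) (A : {fset G}) : H :=
  partial_sum (fun c => a c *: phi c) A.

Lemma psE a A : ps a A = \sum_(i <- A) a i *: phi i.
Proof. by rewrite /ps /partial_sum (big_seq_fsetE _ _ xpredT). Qed.

Lemma ip_ps_phi a A c : ip (ps a A) (phi c) = if c \in A then a c else 0.
Proof.
rewrite psE ip_suml.
under eq_bigr do rewrite ipZl hon.1.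
case: ifPn => cA.
  rewrite (big_fsetD1 c) //= eqxx mulr1 big_seq big1 ?addr0 // => i.
  by rewrite !inE => /andP[/negPf -> _]; rewrite mulr0.
rewrite big_seq big1 // => i iA.
have -> : (i == c) = false by apply/negP => /eqP ci; rewrite -ci iA in cA.
by rewrite mulr0.
Qed.

Lemma ip_ps_l a A y : ip (ps a A) y = \sum_(i <- A) a i * ip (phi i) y.
Proof. by rewrite psE ip_suml; under eq_bigr do rewrite ipZl. Qed.

Lemma ps_norm a A : `|ps a A| ^+ 2 = \sum_(i <- A) a i ^+ 2.
Proof.
rewrite -ipn {1}ip_ps_l big_seq [RHS]big_seq; apply: eq_bigr => i iA.
by rewrite ipC ip_ps_phi iA expr2.
Qed.

Definition coef (h : H) := fun c => ip h (phi c).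

Lemma bessel h (A : {fset G}) : \sum_(i <- A) coef h i ^+ 2 <= `|h| ^+ 2.
Proof.
have e1 : ip h (ps (coef h) A) = \sum_(i <- A) coef h i ^+ 2.
  rewrite ipC ip_ps_l; apply: eq_bigr => i _; rewrite ipC expr2 //.
have := sqr_ge0 `|h - ps (coef h) A|.
rewrite -(ipn (h - _)) !(ipBl, ipBr) ipn (ipC (ps _ _) h) e1 ipn ps_norm.
lra.
Qed.

Lemma big_sub_split (V : zmodType) (F : G -> V) (A0 B : {fset G}) :
  (A0 `<=` B)%fset ->
  \sum_(i <- B) F i = \sum_(i <- A0) F i + \sum_(i <- [fset x in B | x \notin A0]%fset) F i.
Proof.
move=> sB; rewrite (big_fsetID _ (mem A0)) /=.
have -> : [fset x | x in B & x \in A0]%fset = A0.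
  apply/fsetP => x; rewrite !inE /=.
  by apply/andP/idP => [[]//|xA]; split => //; apply: (fsubsetP sB).
by [].
Qed.

Lemma ps_cauchy a K : (forall A : {fset G}, \sum_(i <- A) a i ^+ 2 <= K) ->
  forall eps, 0 < eps -> exists A0 : {fset G},
    forall B, (A0 `<=` B)%fset -> `|ps a A0 - ps a B| < eps.
Proof.
move=> hK eps e0.
set E := [set \sum_(i <- A) a i ^+ 2 | A in [set: {fset G}]].
have hs : has_sup E.
  split; first by exists (\sum_(i <- fset0) a i ^+ 2); exists fset0.
  by exists K => _ [A _ <-]; exact: hK.
have [_ [A0 _ <-] hA0] := sup_adherent (mulr_gt0 e0 e0) hs.
exists A0 => B sB.
set D := [fset x in B | x \notin A0]%fset.
have eB : ps a B = ps a A0 + ps a D by rewrite !psE (@big_sub_split _ _ _ _ sB).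
have sB2 : \sum_(i <- B) a i ^+ 2 = \sum_(i <- A0) a i ^+ 2 + \sum_(i <- D) a i ^+ 2.
  exact: (@big_sub_split _ _ _ _ sB).
have hsup : \sum_(i <- B) a i ^+ 2 <= sup E.
  by apply: sup_ubound; [exact: hs.2 | exists B].
have hD := ps_norm a D.
rewrite eB opprD addrA subrr add0r normrN.
have := normr_ge0 (ps a D).
nra.
Qed.

Lemma ps_cvg a K : (forall A : {fset G}, \sum_(i <- A) a i ^+ 2 <= K) ->
  cvg (ps a @ totally).
Proof.
move=> hK; apply: cauchy_cvg; apply: cauchy_exP => eps e0.
have [A0 hA0] := @ps_cauchy a K hK eps e0.
exists (ps a A0); exists A0 => // B /= sB.
by rewrite -ball_normE /=; exact: hA0.
Qed.

Lemma coef_lim a l : ps a @ totally --> l -> forall c, ip l (phi c) = a c.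
Proof.
move=> hl c; move/cvgrPdist_lt: hl => hl.
apply/eqP; rewrite -subr_eq0 -normr_le0; apply/ler_addgt0Pr => e e0; rewrite add0r.
set d := Num.min (e / 2) 1.
have d0 : 0 < d by rewrite lt_min divr_gt0 // ltr01.
have d1 : d <= e / 2 by rewrite ge_min lexx.
have d2 : d <= 1 by rewrite ge_min lexx orbT.
have [A1 _ hA1] := hl d d0.
have := hA1 (c |` A1)%fset (fsubsetUr _ _).
set B := (c |` A1)%fset.
have cB : c \in B by rewrite fset1U1.
have e1 : ip l (phi c) - a c = ip (l - ps a B) (phi c) by rewrite ipBl ip_ps_phi cB.
have nphi : `|phi c| = 1.
  by apply/eqP; rewrite -sqrp_eq1 // -ipn hon.1 eqxx.
move=> /= hB; rewrite e1; apply: le_trans (ip_bound _ _) _; rewrite nphi.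
have := normr_ge0 (l - ps a B).
nra.
Qed.

Lemma ps_coef_cvg h : ps (coef h) @ totally --> h.
Proof.
have := @ps_cvg (coef h) (`|h| ^+ 2) (bessel h).
set l := lim _ => hc.
have : h - l = 0.
  apply: hon.2 => c; rewrite ipBl (@coef_lim _ _ hc) /coef subrr //.
move/eqP; rewrite subr_eq0 => /eqP hl.
by rewrite [X in _ --> X]hl.
Qed.

Lemma parseval h :
  \esum_(c in [set: G]) ((coef h c) ^+ 2)%:E = (`|h| ^+ 2)%:E.
Proof.
apply/eqP; rewrite eq_le; apply/andP; split.
  apply: ge_ereal_sup => _ [X [finX _] <-].
  rewrite fsbig_finite //= sumEFin lee_fin; exact: bessel.
have hfin : forall B : {fset G}, ((\sum_(i <- B) coef h i ^+ 2)%:E <=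
    \esum_(c in [set: G]) ((coef h c) ^+ 2)%:E)%E.
  move=> B; apply: esum_ge; exists [set` B]; first by split => //; exact: finite_fset.
  by rewrite fsbig_finite ?finite_fset // set_fsetK sumEFin.
have h0 := @esum_ge0 R G setT (fun c => (coef h c ^+ 2)%:E) (fun c _ => sqr_ge0 _).
move: hfin h0; case: (esum _ _) => [r| |] // hfin h0.
rewrite lee_fin; rewrite lee_fin in h0.
have hr : forall B, `|ps (coef h) B| ^+ 2 <= r.
  by move=> B; rewrite ps_norm -lee_fin hfin.
have hs : forall B, `|ps (coef h) B| <= Num.sqrt r.
  by move=> B; rewrite -[X in X <= _]normr_id -sqrtr_sqr ler_sqrt.
have : `|h| <= Num.sqrt r.
  apply/ler_addgt0Pr => e e0.
  move/cvgrPdist_lt: (ps_coef_cvg h) => /(_ e e0) [A1 _ hA1].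
  have /= hd := hA1 A1 (fsubset_refl _).
  have := hs A1; have := ler_normD (h - ps (coef h) A1) (ps (coef h) A1).
  rewrite subrK; lra.
have := sqr_sqrtr h0; have := normr_ge0 h; have := sqrtr_ge0 r; nra.
exact: leey.
Qed.

Lemma Phi_expand (g : H) (n : nat) (p : 'I_n -> R) (w : 'I_n -> G -> R)
  (hw : forall i c, 0 < w i c) f :
  Phi ip phi g p w f = \esum_(c in [set: G])
    (Mfun (fun i => w i c) p (ip g (phi c)) (ip f (phi c)))%:E.
Proof.
rewrite /Phi /wnorm_p -(parseval (f - g)).
rewrite -esum_sum; last first.
  by move=> c i _ _; rewrite lee_fin mulr_ge0 ?powR_ge0 // ltW.
rewrite -esumD; last first.
- by move=> c _; rewrite sume_ge0 // => i _; rewrite lee_fin mulr_ge0 ?powR_ge0 // ltW.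
- by move=> c _; rewrite lee_fin sqr_ge0.
apply: eq_esum => c _; rewrite sumEFin -EFinD /Mfun /coef ipBl; congr (_%:E).
ring.
Qed.

End Hilb.

Theorem lemma1p1 (R : realType) (H : completeNormedModType R)
  (ip : H -> H -> R) (G : choiceType) (phi : G -> H) (g : H) (n : nat)
  (p : 'I_n -> R) (w : 'I_n -> G -> R) (S : G -> R) :
  inner_product ip ->
  orthonormal_basis ip phi ->
  (forall i, 1 <= p i <= 2) ->
  (forall i c, 0 < w i c) ->
  (* S c is the minimizer of M_c, with g_c = <g, phi_c> *)
  (forall c x, Mfun (fun i => w i c) p (ip g (phi c)) (S c)
               <= Mfun (fun i => w i c) p (ip g (phi c)) x) ->
  exists fm : H,
    partial_sum (fun c => S c *: phi c) @ totally --> fm /\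
    forall f : H, (Phi ip phi g p w fm <= Phi ip phi g p w f)%E.
Proof.
move=> hip hon hp hw hmin.
have bound c : S c ^+ 2 <= 4 * (ip g (phi c)) ^+ 2.
  have := hmin c 0; rewrite /Mfun normr0.
  have -> : \sum_(i < n) w i c * (0 `^ p i) = 0.
    apply: big1 => i _; rewrite powR0 ?mulr0 //.
    by have /andP[h1 _] := hp i; apply/eqP => h; rewrite h ler10 in h1.
  have : 0 <= \sum_(i < n) w i c * (`|S c| `^ p i).
    by apply: sumr_ge0 => i _; rewrite mulr_ge0 ?powR_ge0 // ltW.
  nra.
have hK : forall A : {fset G}, \sum_(i <- A) S i ^+ 2 <= 4 * `|g| ^+ 2.
  move=> A; apply: le_trans (_ : \sum_(i <- A) 4 * (ip g (phi i)) ^+ 2 <= _).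
    by apply: ler_sum => i _; exact: bound.
  rewrite -mulr_sumr; apply: ler_pM => //.
    by apply: sumr_ge0 => i _; exact: sqr_ge0.
  exact: (@bessel _ _ _ hip _ _ hon g A).
have hc := @ps_cvg _ _ _ hip _ _ hon _ _ hK.
exists (lim (@ps R H G phi S @ totally)); split; first exact: hc.
move=> f; rewrite !(@Phi_expand _ _ _ hip _ _ hon _ _ _ _ hw).
apply: le_esum => c _; rewrite lee_fin (@coef_lim _ _ _ hip _ _ hon _ _ hc).
exact: hmin.
Qed.
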